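(* Let $n\ge 5$ and let $f$ be an RDF of $P(n,2)$ of weight $\gamma_R(P(n,2))$ with $|V_2|$ minimum among all such minimum-weight RDFs. For any index $i$, if $r_f(V'(i,7)) \le 0.5$, then: (1) $r_f(V'(i,7)) \ge 0.5$ (so $r_f(V'(i,7))=0.5$); (2) $V'(i,7)\cap V_1=\{v_{i+3}\}$; (3) either $V'(i,7)\cap V_2=\{u_{i+1},u_{i+2},v_{i+5}\}$ and $V'(i,7)\cap V_0=V'(i,7)\setminus\{v_{i+3},u_{i+1},u_{i+2},v_{i+5}\}$, or $V'(i,7)\cap V_2=\{u_{i+4},u_{i+5},v_{i+1}\}$ and $V'(i,7)\cap V_0=V'(i,7)\setminus\{v_{i+3},u_{i+4},u_{i+5},v_{i+1}\}$.
   Context: For integers $n \ge 3$ and $1 \le k < n/2$, the generalized Petersen graph $P(n,k)$ has vertex set $\{v_i, u_i : 0 \le i \le n-1\}$ and edge set $\{v_iv_{i+1},\ v_iu_i,\ u_iu_{i+k} : 0 \le i \le n-1\}$, with subscripts taken modulo $n$. A Roman domination function (RDF) of a graph $G$ is a function $f: V(G)\to\{0,1,2\}$ such that every vertex $u$ with $f(u)=0$ is adjacent to at least one vertex $v$ with $f(v)=2$. Its weight is $\sum_{u\in V(G)} f(u)$; $\gamma_R(G)$ is the minimum weight of an RDF of $G$. For an RDF $f$ write $V_i=\{w: f(w)=i\}$, $i=0,1,2$. Define $g_f(w)=0.5$ if $w\in V_2$, $g_f(w)=1$ if $w\in V_1$, and $g_f(w)=0.5\,|N(w)\cap V_2|$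 if $w\in V_0$, where $N(w)$ is the set of neighbors of $w$. Let $r_f(w)=g_f(w)-0.5$ and, for $S\subseteq V(P(n,2))$, $r_f(S)=\sum_{w\in S} r_f(w)$. For an integer $i$ and $t\ge 1$, $V'(i,t)=\{v_j,u_j : i\le j\le i+t-1\}$ (subscripts modulo $n$). *)

(* Defs.v *)
From HB Require Import structures.
From mathcomp Require Import all_boot all_order all_algebra.
Set Implicit Arguments. Unset Strict Implicit. Unset Printing Implicit Defensive.
Import Order.TTheory GRing.Theory Num.Theory.

(* Vertices of P(n,k): (false, j) is v_j (outer), (true, j) is u_j (inner). *)
Definition vert (n : nat) := (bool * 'I_n)%type.

Definition gp_adj (n k : nat) (w z : vert n) : bool :=
  let x := val w.2 in let y := val z.2 in
  [|| [&& ~~ w.1, ~~ z.1 & (y == (x + 1) %% n) || (x == (y + 1) %% n)],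
      (w.1 != z.1) && (x == y)
    | [&& w.1, z.1 & (y == (x + k) %% n) || (x == (y + k) %% n)]].

Definition nbhd (n k : nat) (w : vert n) : {set vert n} := [set z | gp_adj k w z].

Definition isRDF (n k : nat) (f : vert n -> nat) : Prop :=
  (forall w, f w <= 2) /\
  (forall w, f w = 0 -> exists z, gp_adj k w z /\ f z = 2).

Definition weight (n : nat) (f : vert n -> nat) : nat := \sum_(w : vert n) f w.

Definition is_gammaR_RDF (n k : nat) (f : vert n -> nat) : Prop :=
  isRDF k f /\ forall g : vert n -> nat, isRDF k g -> weight f <= weight g.

Definition Vset (n : nat) (f : vert n -> nat) (a : nat) : {set vert n} :=
  [set w | f w == a].

Definition min_V2_gammaR_RDF (n k : nat) (f : vert n -> nat) : Prop :=
  is_gammaR_RDF k f /\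
  forall g : vert n -> nat, is_gammaR_RDF k g -> #|Vset f 2| <= #|Vset g 2|.

Local Open Scope ring_scope.

Definition g_f (n k : nat) (f : vert n -> nat) (w : vert n) : rat :=
  if f w == 2%N then 1 / 2
  else if f w == 1%N then 1
  else (#|nbhd k w :&: Vset f 2|)%:R / 2.

Definition r_f (n k : nat) (f : vert n -> nat) (w : vert n) : rat :=
  g_f k f w - 1 / 2.

Definition r_set (n k : nat) (f : vert n -> nat) (S : {set vert n}) : rat :=
  \sum_(w in S) r_f k f w.

Local Close Scope ring_scope.

Definition Vwin (n i t : nat) : {set vert n} :=
  [set w : vert n | [exists j : 'I_t, val w.2 == (i + j) %% n]].

Definition vx (n : nat) (b : bool) (j : nat) : {set vert n} :=
  [set w : vert n | (w.1 == b) && (val w.2 == j %% n)].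

(* Main.v *)
Require Import Defs.
From HB Require Import structures.
From mathcomp Require Import all_boot all_order all_algebra.
From mathcomp Require Import zify.
Definition snb (k : nat) : seq nat :=
  if odd k then [:: k + 4; k - 4; k.-1] else [:: k + 2; k - 2; k.+1].
Definition vd k := if odd k then (5 <= k <= 17) else (2 <= k <= 18).
Definition c2 (p : nat -> nat) k := count (fun y => p y == 2) (snb k).
Definition rr p k := if p k == 2 then 0 else if p k == 1 then 1 else (c2 p k).-1.
Inductive cst := CRdf of nat | CPriv of nat | CSum of seq nat | CPer of nat & nat.
Definition enc (c : cst) : nat * seq nat := match c with
  | CRdf x => (0, [:: x]) | CPriv x => (1, [:: x]) | CSum xs => (2, xs)
  | CPer x y => (3, [:: x; y]) end.
Definition dec (e : nat * seq nat) : option cst := match e with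
  | (0, [:: x]) => Some (CRdf x) | (1, [:: x]) => Some (CPriv x)
  | (2, xs) => Some (CSum xs) | (3, [:: x; y]) => Some (CPer x y) | _ => None end.
Lemma encK : pcancel enc dec. Proof. by case. Qed.
HB.instance Definition _ := Equality.copy cst (pcan_type encK).
Definition evalc (c : cst) (p : nat -> nat) : bool :=
  match c with
  | CRdf x => ((p x == 0) ==> (0 < c2 p x)) && ((p x != 0) ==> (c2 p x == 0))
  | CPriv x => (p x == 2) ==> (2 <= count (fun y => (p y == 0) && (c2 p y == 1)) (snb x))
  | CSum xs => sumn (map (rr p) xs) <= 1
  | CPer x y => p x == p y
  end.
Definition reads c := match c with
  | CRdf x => x :: snb x
  | CPriv x => x :: snb x ++ flatten (map snb (snb x))
  | CSum xs => xs ++ flatten (map snb xs)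
  | CPer x y => [:: x; y] end.
Definition maxl (s : seq nat) := foldr maxn 0 s.
Definition Wm m := iota 4 (2 * m).
Definition allcs m (per : bool) :=
  [seq CRdf x | x <- iota 0 22 & vd x] ++
  [seq CPriv x | x <- iota 0 22 & vd x && all vd (snb x)] ++
  [seq CSum [seq x <- Wm m | maxl (x :: snb x) <= k] | k <- iota 0 22] ++
  (if per then [seq CPer x (x - 2 * m) | x <- iota (2 * m) (22 - 2 * m)] else [::]).
Definition cs_at m per k := [seq c <- allcs m per | maxl (reads c) == k].
Fixpoint stages m per k : seq (seq nat) :=
  match k with
  | 0 => [:: [::]]
  | k'.+1 => let cs := cs_at m per k' in
      [seq s <- allpairs (fun s v => rcons s v) (stages m per k') [:: 0; 1; 2]
             | all (fun c => evalc c (nth 0 s)) cs]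
  end.
Definition Alist := [:: 0;0; 0;2; 0;2; 1;0; 0;0; 2;0; 0;0].
Definition Blist := [:: 0;0; 2;0; 0;0; 1;0; 0;2; 0;2; 0;0].
Definition goal7 (p : nat -> nat) :=
  (sumn (map (rr p) (Wm 7)) == 1) &&
  ((map p (Wm 7) == Alist) || (map p (Wm 7) == Blist)).
Lemma chk7 : all (fun s => goal7 (nth 0 s)) (stages 7 false 22).
Proof. Time vm_compute. reflexivity. Qed.
Lemma chk5 : stages 5 true 22 = [::].
Proof. Time vm_compute. reflexivity. Qed.
Lemma chk6 : stages 6 true 22 = [::].
Proof. Time vm_compute. reflexivity. Qed.

Lemma c2_local p q k : (forall j, j \in snb k -> p j = q j) -> c2 p k = c2 q k.
Proof. by move=> H; apply: eq_in_count => y /H ->. Qed.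
Lemma rr_local p q k : (forall j, j \in k :: snb k -> p j = q j) -> rr p k = rr q k.
Proof.
move=> H; rewrite /rr H ?mem_head // (@c2_local _ q) // => j jk; apply: H.
by rewrite inE jk orbT.
Qed.
Lemma evalc_local c p q : (forall j, j \in reads c -> p j = q j) -> evalc c p = evalc c q.
Proof.
case: c => [x|x|xs|x y] /= H.
- rewrite H ?mem_head // (@c2_local _ q) // => j jk; apply: H; by rewrite inE jk orbT.
- rewrite H ?mem_head //; congr (_ ==> _); congr (_ <= _); apply: eq_in_count => y ys.
  rewrite H; last by rewrite inE mem_cat ys orbT.
  rewrite (@c2_local _ q) // => j jy; apply: H; rewrite inE mem_cat; apply/orP; right; apply/orP; right.
  by apply/flattenP; exists (snb y) => //; apply: map_f.
- suff -> : map (rr p) xs = map (rr q) xs by []; apply/eq_in_map => x xs'; apply: rr_local => j.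
  rewrite inE => /orP [/eqP ->|jx]; apply: H; rewrite mem_cat ?xs' //.
  apply/orP; right; apply/flattenP; exists (snb x) => //; exact: map_f.
- by rewrite !H ?mem_head // inE mem_head orbT.
Qed.
Lemma maxl_ge s j : j \in s -> j <= maxl s.
Proof.
elim: s => //= a s IH; rewrite inE => /orP [/eqP ->|/IH]; first exact: leq_maxl.
move=> h; exact: leq_trans h (leq_maxr _ _).
Qed.
Lemma mkseqS (P : nat -> nat) k : mkseq P k.+1 = rcons (mkseq P k) (P k).
Proof. by rewrite /mkseq -addn1 iotaD map_cat /= cats1. Qed.
Lemma stages_sound m per (P : nat -> nat) :
  (forall j, P j <= 2) -> (forall c, c \in allcs m per -> evalc c P) ->
  forall k, mkseq P k \in stages m per k.
Proof.
move=> H2 Hc; elim=> [|k IH]; first by rewrite /= inE.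
rewrite /=.
rewrite mem_filter; apply/andP; split.
  apply/allP => c; rewrite mem_filter => /andP [/eqP mc cin].
  rewrite (@evalc_local _ _ P); first exact: Hc.
  move=> j jr; have jk : j < k.+1 by rewrite ltnS -mc maxl_ge.
  by rewrite nth_mkseq.
rewrite mkseqS; apply/flattenP; exists [:: rcons (mkseq P k) 0; rcons (mkseq P k) 1; rcons (mkseq P k) 2].
  exact: (map_f (fun x => [:: rcons x 0; rcons x 1; rcons x 2])).
by have := H2 k; case: (P k) => [|[|[|]]] //= _; rewrite !inE eqxx ?orbT.
Qed.
Lemma chk7' s : s \in stages 7 false 22 -> goal7 (nth 0 s).
Proof. move=> h; exact: (allP chk7 s h). Qed.

Set Implicit Arguments. Unset Strict Implicit. Unset Printing Implicit Defensive.
Import Order.TTheory GRing.Theory Num.Theory.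

Definition rv n' (b : bool) (x : nat) : vert n'.+1 := (b, inord (x %% n'.+1)).

Lemma rv2 n' b x : val (rv n' b x).2 = x %% n'.+1.
Proof. by rewrite /= inordK // ltn_pmod. Qed.

Lemma rv_mod n' b x y : x %% n'.+1 = y %% n'.+1 -> rv n' b x = rv n' b y.
Proof. by rewrite /rv => ->. Qed.

Lemma eq_rv n' (z : vert n'.+1) b x :
  (z == rv n' b x) = (z.1 == b) && (val z.2 == x %% n'.+1).
Proof.
case: z => c y; rewrite /rv xpair_eqE /= -(inj_eq val_inj) /= inordK //.
by rewrite ltn_pmod.
Qed.

Definition nbs n' (w : vert n'.+1) : seq (vert n'.+1) :=
  let x := val w.2 in
  if w.1 then [:: rv n' true (x + 2); rv n' true (x + (n'.+1 - 2)); rv n' false x]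
  else [:: rv n' false (x + 1); rv n' false (x + (n'.+1 - 1)); rv n' true x].

Lemma mod_flip N x y d : d <= N -> x < N -> y < N ->
  (x == (y + d) %% N) = (y == (x + (N - d)) %% N).
Proof.
move=> dN xN yN.
rewrite -{1}(modn_small xN) -(eqn_modDr (N - d)) -addnA subnKC // modnDr.
by rewrite (modn_small yN) eq_sym.
Qed.

Lemma adjE n' (w z : vert n'.+1) : 4 < n'.+1 -> gp_adj 2 w z = (z \in nbs w).
Proof.
move=> N5; case: w z => [b x] [c y]; rewrite /gp_adj /nbs /=.
have xN := ltn_ord x; have yN := ltn_ord y.
case: b; case: c; rewrite !inE !eq_rv /= ?orbF ?andbF ?andbT ?(modn_small xN) //.
- rewrite (@mod_flip n'.+1 x y 2) //; lia.
- rewrite (@mod_flip n'.+1 x y 1) //; lia.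
Qed.

Lemma mod_ne N x a b : a < N -> b < N -> a != b -> (x + a) %% N != (x + b) %% N.
Proof. by move=> aN bN ab; rewrite eqn_modDl !modn_small. Qed.

Lemma nbs_uniq n' (w : vert n'.+1) : 4 < n'.+1 -> uniq (nbs w).
Proof.
move=> N5; case: w => [b x]; rewrite /nbs /=.
case: b; rewrite /= !inE !eq_rv !rv2 /= ?andbF ?andbT ?orbF.
- by apply: mod_ne; lia.
- by apply: mod_ne; lia.
Qed.

Lemma self_ne N x d : x < N -> 0 < d < N -> (x == (x + d) %% N) = false.
Proof.
move=> xN /andP[d0 dN]; apply/negbTE; have := @mod_ne N x 0 d.
rewrite addn0 modn_small //; apply => //; [lia | by rewrite eq_sym -lt0n].
Qed.

Lemma nbs_notin n' (w : vert n'.+1) : 4 < n'.+1 -> w \notin nbs w.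
Proof.
move=> N5; case: w => [b x]; rewrite /nbs /=.
have xN := ltn_ord x.
case: b; rewrite /= !inE !eq_rv /= ?andbF ?andbT ?orbF !self_ne //; lia.
Qed.

Lemma adj_sym n k (w z : vert n) : gp_adj k w z = gp_adj k z w.
Proof.
rewrite /gp_adj; case: w z => [b x] [c y] /=.
case: b; case: c => /=; rewrite ?orbF ?andbF ?andbT //.
all: first [by rewrite orbC | by rewrite eq_sym].
Qed.

Lemma card_seq (T : finType) (s : seq T) (P : pred T) : uniq s ->
  #|[set y | (y \in s) && P y]| = count P s.
Proof.
move=> U; rewrite -size_filter -(card_uniqP (filter_uniq P U)).
by apply: eq_card => z; rewrite inE mem_filter andbC.
Qed.

Definition c2f n' (f : vert n'.+1 -> nat) (w : vert n'.+1) :=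
  count (fun z => f z == 2) (nbs w).

Lemma c2fE n' (f : vert n'.+1 -> nat) w : 4 < n'.+1 ->
  #|nbhd 2 w :&: Vset f 2| = c2f f w.
Proof.
move=> N5; rewrite /c2f -card_seq; last exact: nbs_uniq.
by apply: eq_card => z; rewrite !inE adjE.
Qed.

Lemma wt_split n (f g : vert n -> nat) (D : {set vert n}) :
  (forall z, z \notin D -> g z = f z) ->
  weight g + \sum_(z in D) f z = weight f + \sum_(z in D) g z.
Proof.
move=> H; rewrite /weight [X in _ + X]big_mkcond [X in _ = _ + X]big_mkcond -!big_split /=; apply: eq_bigr => z _.
by case: (boolP (z \in D)) => zD //=; [lia | rewrite H //; lia].
Qed.

Lemma cardV2_split n (f g : vert n -> nat) (D : {set vert n}) :
  (forall z, z \notin D -> g z = f z) ->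
  #|Vset g 2| + #|Vset f 2 :&: D| = #|Vset f 2| + #|Vset g 2 :&: D|.
Proof.
move=> H; rewrite -(cardsID D (Vset g 2)) -(cardsID D (Vset f 2)).
have -> : Vset g 2 :\: D = Vset f 2 :\: D.
  by apply/setP => z; rewrite !inE; case: (boolP (z \in D)) => //= zD; rewrite H.
lia.
Qed.

Lemma no_better n (f g : vert n -> nat) : min_V2_gammaR_RDF 2 f -> isRDF 2 g ->
  weight g <= weight f -> #|Vset g 2| < #|Vset f 2| -> False.
Proof.
move=> [[Rf Hf] Hm] Rg wle cl.
have : is_gammaR_RDF 2 g.
  by split=> // h Rh; apply: leq_trans wle (Hf h Rh).
move/Hm; lia.
Qed.

Lemma no_lighter n (f g : vert n -> nat) : min_V2_gammaR_RDF 2 f -> isRDF 2 g ->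
  weight g < weight f -> False.
Proof. move=> [[Rf Hf] Hm] Rg; have := Hf g Rg; lia. Qed.


Lemma F1 n (f : vert n -> nat) w : min_V2_gammaR_RDF 2 f -> f w <= 2.
Proof. by move=> [[[H _] _] _]. Qed.

Lemma F2 n' (f : vert n'.+1 -> nat) w : 4 < n'.+1 -> min_V2_gammaR_RDF 2 f ->
  f w = 0 -> 0 < c2f f w.
Proof.
move=> N5 [[[_ H] _] _] /H [z [adj fz]].
rewrite /c2f -has_count; apply/hasP; exists z; last by rewrite fz.
by rewrite -adjE.
Qed.

Lemma F3a n' (f : vert n'.+1 -> nat) w : 4 < n'.+1 -> min_V2_gammaR_RDF 2 f ->
  f w = 1 -> c2f f w = 0.
Proof.
move=> N5 Hm fw; apply/eqP; rewrite eqn0Ngt; apply/negP.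
rewrite /c2f -has_count => /hasP [y yn /eqP fy].
pose g z := if z == w then 0 else f z.
apply: (@no_lighter _ f g Hm).
  split=> z; rewrite /g; first by case: eqP => // _; apply: F1 Hm.
  case: eqP => [-> _|zw fz].
    exists y; split; first by rewrite adjE.
    by case: eqP => [yw|//]; move: fy; rewrite yw fw.
  have [[[_ H] _] _] := Hm; have [x [ax fx]] := H z fz.
  by exists x; split => //; case: eqP => [xw|//]; move: fx; rewrite xw fw.
have E : weight g + \sum_(z in [set w]) f z = weight f + \sum_(z in [set w]) g z.
  by apply: wt_split => z; rewrite inE /g => /negbTE ->.
move: E; rewrite !big_set1 /g eqxx fw; lia.
Qed.

Lemma count_disj (T : eqType) (a b : pred T) s : (forall x, a x -> ~~ b x) ->
  count a s + count b s <= size s.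
Proof.
move=> H; elim: s => //= x s IH; have := H x.
case: (a x); case: (b x) => /= h; try lia.
Qed.

Lemma count_other (T : eqType) (a : pred T) s w : uniq s ->
  count a s <= count (fun y => a y && (y != w)) s + 1.
Proof.
move=> U; have : count (pred1 w) s <= 1 by rewrite count_uniq_mem // leq_b1.
suff : count a s <= count (fun y => a y && (y != w)) s + count (pred1 w) s by lia.
elim: s {U} => //= x s IH; case: (a x); case: (x == w) => /=; lia.
Qed.

Lemma F34 n' (f : vert n'.+1 -> nat) w : 4 < n'.+1 -> min_V2_gammaR_RDF 2 f ->
  f w = 2 -> c2f f w = 0 /\ 2 <= count (fun y => (f y == 0) && (c2f f y == 1)) (nbs w).
Proof.
move=> N5 Hm fw.
set Q := (fun y => (f y == 0) && (c2f f y == 1)).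
case: (boolP ((c2f f w == 0) && (2 <= count Q (nbs w)))) => [/andP[/eqP -> ->] //|Hneg].
exfalso.
pose P := [set y | (y \in nbs w) && Q y].
have cP : #|P| = count Q (nbs w) by apply: card_seq; exact: nbs_uniq.
have fP : forall y, y \in P -> f y = 0.
  by move=> y; rewrite inE /Q => /andP [_ /andP [/eqP -> _]].
have wP : w \notin P by apply/negP => /fP; rewrite fw.
pose gw := if 0 < c2f f w then 0 else 1.
pose g z := if z == w then gw else if z \in P then 1 else f z.
have Bd : gw + #|P| <= 2.
  rewrite /gw cP; case: ifP => c0.
  - have : count Q (nbs w) + count (fun z => f z == 2) (nbs w) <= size (nbs w).
      by apply: count_disj => x; rewrite /Q => /andP [/eqP -> _].
    have -> : size (nbs w) = 3 by rewrite /nbs; case: (w.1).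
    rewrite -/(c2f f w); lia.
  - have c00 : c2f f w = 0 by lia.
    move: Hneg; rewrite c00 eqxx /= -ltnNge; lia.
have gD : forall z, z \in w |: P -> g z <= 1.
  move=> z; rewrite in_setU1 /g => /orP [/eqP ->|zP]; first by rewrite eqxx /gw; case: ifP.
  by case: eqP => _; [rewrite /gw; case: ifP | rewrite zP].
have Ew : weight g + \sum_(z in w |: P) f z = weight f + \sum_(z in w |: P) g z.
  by apply: wt_split => z; rewrite in_setU1 negb_or => /andP [/negbTE zw /negbTE zP]; rewrite /g zw zP.
rewrite !big_setU1 //= in Ew.
rewrite big1 in Ew; last by move=> z /fP.
have gP : \sum_(z in P) g z = #|P|.
  rewrite -sum1_card; apply: eq_bigr => z zP.
  have zw : z != w by apply: contraNneq wP => <-.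
  by rewrite /g (negbTE zw) zP.
have gww : g w = gw by rewrite /g eqxx.
rewrite gP gww fw in Ew.
have Wle : weight g <= weight f by lia.
have Cl : #|Vset g 2| < #|Vset f 2|.
  have E2 := @cardV2_split _ f g (w |: P).
  have h1 : 0 < #|Vset f 2 :&: (w |: P)|.
    by apply/card_gt0P; exists w; rewrite !inE fw !eqxx.
  have h2 : Vset g 2 :&: (w |: P) = set0.
    apply/setP => z; rewrite in_setI in_set0 [z \in Vset _ _]inE.
    case: (boolP (z \in w |: P)) => [zD|]; last by rewrite andbF.
    by have := gD z zD; case: (g z) => [|[|]].
  have : #|Vset g 2| + #|Vset f 2 :&: (w |: P)| = #|Vset f 2| + #|Vset g 2 :&: (w |: P)|.
    by apply: E2 => z; rewrite in_setU1 negb_or => /andP [/negbTE zw /negbTE zP]; rewrite /g zw zP.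
  rewrite h2 cards0; lia.
have Rg : isRDF 2 g.
  split=> z.
  - rewrite /g; case: (z == w); first by rewrite /gw; case: ifP.
    by case: (z \in P) => //; exact: F1 Hm.
  - rewrite /g; case: eqP => [-> |/eqP zw].
    + rewrite /gw; case: ifP => // c0 _.
      move: c0; rewrite /c2f -has_count => /hasP [y yn /eqP fy].
      have yw : y != w by apply: contraNneq (nbs_notin w N5) => yw; rewrite -[X in X \in _]yw.
      have yP : y \notin P by apply/negP => /fP; rewrite fy.
      exists y; split; first by rewrite adjE.
      by rewrite (negbTE yw) (negbTE yP).
    + case: ifP => // zP fz.
      have [[[_ H] _] _] := Hm; have [y [ay fy]] := H z fz.
      case: (eqVneq y w) => [yw | yw].
      * subst y.
        have zn : z \in nbs w by rewrite -adjE // adj_sym.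
        have c1 : c2f f z != 1.
          by move: zP; rewrite inE zn /Q fz eqxx /= => /negbT.
        have c0 : 0 < c2f f z.
          by rewrite /c2f -has_count; apply/hasP; exists w; [rewrite -adjE | rewrite fy].
        have : 1 <= count (fun y => (f y == 2) && (y != w)) (nbs z).
          have := @count_other _ (fun z => f z == 2) (nbs z) w (nbs_uniq z N5).
          rewrite -/(c2f f z) /= => h; have h2 : 2 <= c2f f z by lia.
          by rewrite -(leq_add2r 1); exact: leq_trans h2 h.
        rewrite -has_count => /hasP [y' y'n /andP [/eqP fy' y'w]].
        exists y'; split; first by rewrite adjE.
        have y'P: y' \notin P by apply/negP => /fP; rewrite fy'.
        by rewrite (negbTE y'w) (negbTE y'P).
      * exists y; split => //.
        have yP: y \notin P by apply/negP => /fP; rewrite fy.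
        by rewrite (negbTE yw) (negbTE yP).
exact: (no_better Hm Rg Wle Cl).
Qed.

Definition Rk n' i k : vert n'.+1 := rv n' (odd k) (i + n'.-1 + k./2).

Lemma nbsR n' i k : 4 < n'.+1 -> vd k -> nbs (Rk n' i k) = map (Rk n' i) (snb k).
Proof.
move=> N5; rewrite /vd /snb /Rk /nbs rv2 /=.
case ok : (odd k) => /andP [k1 k2] /=.
- have e1 : odd (k + 4) = true by lia.
  have e2 : odd (k - 4) = true by lia.
  have e3 : odd k.-1 = false by lia.
  rewrite ?e1 ?e2 ?e3 /= ?ok.
  congr [:: _; _; _]; apply: rv_mod; rewrite ?modnDml ?modn_mod.
  + congr (_ %% _); lia.
  + have -> : i + n'.-1 + k./2 + (n'.+1 - 2) = i + n'.-1 + (k - 4)./2 + n'.+1 by lia.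
    by rewrite modnDr.
  + congr (_ %% _); lia.
- have e1 : odd (k + 2) = false by lia.
  have e2 : odd (k - 2) = false by lia.
  rewrite ?e1 ?e2 /= ?ok ?uphalf_half ?ok /=.
  congr [:: _; _; _]; apply: rv_mod; rewrite ?modnDml ?modn_mod.
  + congr (_ %% _); lia.
  + have -> : i + n'.-1 + k./2 + (n'.+1 - 1) = i + n'.-1 + (k - 2)./2 + n'.+1 by lia.
    by rewrite modnDr.
  + congr (_ %% _); lia.
Qed.

Definition rrf n' (f : vert n'.+1 -> nat) w :=
  if f w == 2 then 0 else if f w == 1 then 1 else (c2f f w).-1.

Lemma c2R n' i (f : vert n'.+1 -> nat) k : 4 < n'.+1 -> vd k ->
  c2 (fun k => f (Rk n' i k)) k = c2f f (Rk n' i k).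
Proof. by move=> N5 vk; rewrite /c2 /c2f nbsR // count_map. Qed.

Lemma rrR n' i (f : vert n'.+1 -> nat) k : 4 < n'.+1 -> vd k ->
  rr (fun k => f (Rk n' i k)) k = rrf f (Rk n' i k).
Proof. by move=> N5 vk; rewrite /rr /rrf c2R. Qed.

Lemma sumn_filter_le (s : seq nat) (F : nat -> nat) (q : pred nat) :
  sumn (map F (filter q s)) <= sumn (map F s).
Proof. elim: s => //= x s IH; case: (q x) => /=; lia. Qed.

Lemma allcs_ok n' i (f : vert n'.+1 -> nat) m (per : bool) : 4 < n'.+1 ->
  min_V2_gammaR_RDF 2 f -> m <= 7 -> (per -> m = n'.+1) ->
  sumn (map (rr (fun k => f (Rk n' i k))) (Wm m)) <= 1 ->
  forall c, c \in allcs m per -> evalc c (fun k => f (Rk n' i k)).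
Proof.
move=> N5 Hm m7 Hper Hs c; rewrite /allcs !mem_cat => /orP [|/orP [|/orP []]].
- case/mapP => x; rewrite mem_filter => /andP [vx _] -> /=.
  rewrite c2R //; have := F1 (Rk n' i x) Hm.
  case fx : (f _) => [|[|[|]]] // _ /=.
  + by rewrite (F2 N5 Hm fx).
  + by rewrite (F3a N5 Hm fx).
  + by rewrite (F34 N5 Hm fx).1.
- case/mapP => x; rewrite mem_filter => /andP [/andP [vx av] _] -> /=.
  apply/implyP => /eqP fx.
  have [_ h] := F34 N5 Hm fx; move: h; rewrite nbsR // count_map.
  congr (_ <= _); apply: eq_in_count => y ys /=; rewrite c2R //.
  exact: (allP av).
- case/mapP => k _ -> /=; apply: leq_trans Hs; exact: sumn_filter_le.
- case: per Hper => // /(_ isT) mN; case/mapP => x; rewrite mem_iota => xr -> /=.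
  rewrite /Rk; have -> : odd (x - 2 * m) = odd x by lia.
  rewrite (@rv_mod _ _ (i + n'.-1 + x./2) (i + n'.-1 + (x - 2 * m)./2)) //.
  have -> : i + n'.-1 + x./2 = i + n'.-1 + (x - 2 * m)./2 + n'.+1 by lia.
  by rewrite modnDr.
Qed.

Lemma RkmodE n' i k : 4 < n'.+1 -> 4 <= k -> (i + n'.-1 + k./2) %% n'.+1 = (i + (k./2 - 2)) %% n'.+1.
Proof.
move=> N5 k4; have -> : i + n'.-1 + k./2 = i + (k./2 - 2) + n'.+1 by lia.
by rewrite modnDr.
Qed.

Lemma inVwin n' i (w : vert n'.+1) : 4 < n'.+1 ->
  (w \in Vwin n'.+1 i 7) = (w \in map (Rk n' i) (Wm (minn n'.+1 7))).
Proof.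
move=> N5; set m := minn n'.+1 7.
have m7 : m <= 7 by rewrite /m geq_minr.
have mN : m <= n'.+1 by rewrite /m geq_minl.
have m5 : 4 < m by rewrite /m; lia.
apply/idP/idP.
- rewrite inE => /existsP [j /eqP hj].
  pose j' := j %% m.
  have j'm : j' < m by rewrite ltn_pmod //; lia.
  have hj' : (i + j') %% n'.+1 = (i + j) %% n'.+1.
    case: (leqP n'.+1 7) => hN.
    - have mE : m = n'.+1 by rewrite /m; lia.
      by rewrite /j' mE modnDmr.
    - have mE : m = 7 by rewrite /m; lia.
      by rewrite /j' mE (modn_small (ltn_ord j)).
  case: w hj => [b x] /= hj.
  apply/mapP; exists (4 + 2 * j' + b); first by rewrite mem_iota; case: b; lia.
  rewrite /Rk; apply/eqP; rewrite eq_rv /=.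
  apply/andP; split; first by apply/eqP; case: b => /=; lia.
  have -> : i + n'.-1 + (0 + 2 * j' + b)./2.+2 = i + j' + n'.+1 by case: b; lia.
  by rewrite modnDr hj' hj.
- case/mapP => k; rewrite mem_iota => kr ->.
  rewrite inE; apply/existsP.
  have jl : k./2 - 2 < 7 by lia.
  exists (Ordinal jl); rewrite rv2 /= RkmodE //; lia.
Qed.

Lemma uniqR n' i : 4 < n'.+1 -> uniq (map (Rk n' i) (Wm (minn n'.+1 7))).
Proof.
move=> N5; rewrite map_inj_in_uniq ?iota_uniq // => k1 k2.
rewrite !mem_iota => h1 h2 /eqP e; rewrite /Rk eq_rv rv2 /= in e.
case/andP: e => /eqP o.
have a1 : 4 <= k1 by lia. have a2 : 4 <= k2 by lia.
have b1 : k1./2 - 2 < n'.+1 by lia. have b2 : k2./2 - 2 < n'.+1 by lia.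
rewrite !RkmodE // eqn_modDl !modn_small //.
move=> /eqP e; lia.
Qed.

Lemma sumVwin n' i (F : vert n'.+1 -> nat) : 4 < n'.+1 ->
  \sum_(w in Vwin n'.+1 i 7) F w =
  sumn (map (fun k => F (Rk n' i k)) (Wm (minn n'.+1 7))).
Proof.
move=> N5; rewrite -big_enum.
rewrite (perm_big _ (uniq_perm (enum_uniq _) (uniqR i N5) _)); last first.
  by move=> w; rewrite mem_enum inVwin.
by rewrite big_map sumnE big_map.
Qed.

From mathcomp Require Import lra.
Local Open Scope ring_scope.

Lemma r_fE n' (f : vert n'.+1 -> nat) w : (4 < n'.+1)%N -> min_V2_gammaR_RDF 2 f ->
  r_f 2 f w = (rrf f w)%:R / 2.
Proof.
move=> N5 Hm; rewrite /r_f /g_f c2fE // /rrf; have := F1 w Hm.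
case fw : (f w) => [|[|[|]]] // _ /=.
- have := F2 N5 Hm fw; case: (c2f f w) => // c _ /=.
  rewrite -[c.+1]addn1 natrD; lra.
Qed.

Lemma vdW m y : (m <= 7)%N -> y \in Wm m -> vd y.
Proof. rewrite mem_iota /vd => m7 h; case: ifP => o; lia. Qed.

Lemma r_setE n' i (f : vert n'.+1 -> nat) : (4 < n'.+1)%N -> min_V2_gammaR_RDF 2 f ->
  r_set 2 f (Vwin n'.+1 i 7) =
  (sumn (map (rr (fun k => f (Rk n' i k))) (Wm (minn n'.+1 7))))%:R / 2.
Proof.
move=> N5 Hm; rewrite /r_set (eq_bigr _ (fun w _ => r_fE w N5 Hm)) -mulr_suml -natr_sum.
rewrite sumVwin //; congr (_%:R / 2); congr sumn; apply/eq_in_map => y yW /=.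
rewrite rrR //; apply: (@vdW (minn n'.+1 7)) => //; exact: geq_minr.
Qed.

Local Close Scope ring_scope.

Lemma VwinV n' i (f : vert n'.+1 -> nat) v : 4 < n'.+1 ->
  Vwin n'.+1 i 7 :&: Vset f v =
  [set w | w \in map (Rk n' i) [seq y <- Wm (minn n'.+1 7) | f (Rk n' i y) == v]].
Proof.
move=> N5; apply/setP => w; rewrite in_setI inVwin // [w \in Vset _ _]inE [in RHS]inE.
have -> : map (Rk n' i) [seq y <- Wm (minn n'.+1 7) | f (Rk n' i y) == v] =
          [seq z <- map (Rk n' i) (Wm (minn n'.+1 7)) | f z == v] by rewrite filter_map.
by rewrite mem_filter andbC.
Qed.

Lemma V0split n (A : {set vert n}) (f : vert n -> nat) : (forall w, f w <= 2) ->
  A :&: Vset f 0 = A :\: ((A :&: Vset f 1) :|: (A :&: Vset f 2)).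
Proof.
move=> H; apply/setP => w; rewrite !inE; case: (w \in A) => //=.
by have := H w; case: (f w) => [|[|[|]]].
Qed.

Lemma vxE n' b j w : (w \in vx n'.+1 b j) = (w == rv n' b j).
Proof. by rewrite inE eq_rv. Qed.

Lemma RkE n' i k b j : odd k = b -> i + n'.-1 + k./2 = j + n'.+1 -> Rk n' i k = rv n' b j.
Proof. by move=> o e; rewrite /Rk o; apply: rv_mod; rewrite e modnDr. Qed.

Lemma snb_le y j : j \in snb y -> j <= y + 4.
Proof.
rewrite /snb; case: (odd y); rewrite !inE => /orP [/eqP ->|/orP [/eqP ->|/eqP ->]]; lia.
Qed.

Lemma goal7_local (P : nat -> nat) : goal7 (nth 0 (mkseq P 22)) = goal7 P.
Proof.
have E : forall y, y \in Wm 7 -> forall j, j \in y :: snb y -> nth 0 (mkseq P 22) j = P j.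
  move=> y; rewrite mem_iota => yr j; rewrite inE => /orP [/eqP ->|/snb_le h];
  rewrite nth_mkseq //; lia.
have e1 : map (rr (nth 0 (mkseq P 22))) (Wm 7) = map (rr P) (Wm 7).
  apply/eq_in_map => y yW; apply: rr_local => j jy; exact: E y yW j jy.
have e2 : map (nth 0 (mkseq P 22)) (Wm 7) = map P (Wm 7).
  apply/eq_in_map => z zW; exact: (E z zW z (mem_head _ _)).
by rewrite /goal7 e1 e2.
Qed.

Lemma filtL (P : nat -> nat) L v : map P (Wm 7) = L ->
  [seq y <- Wm 7 | P y == v] = [seq y <- Wm 7 | nth 0 L (y - 4) == v].
Proof.
move=> HL; apply: eq_in_filter => y; rewrite mem_iota => yr.
rewrite -HL (nth_map 0) ?size_iota; last lia.
by rewrite nth_iota; [congr (P _ == _); lia | lia].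
Qed.

Theorem lemma2p8 (n : nat) (f : vert n -> nat) (i : nat) :
  5 <= n ->
  min_V2_gammaR_RDF 2 f ->
  (r_set 2 f (Vwin n i 7) <= 1 / 2)%R ->
  (r_set 2 f (Vwin n i 7) >= 1 / 2)%R /\
  Vwin n i 7 :&: Vset f 1 = vx n false (i + 3) /\
  ((Vwin n i 7 :&: Vset f 2 =
      vx n true (i + 1) :|: vx n true (i + 2) :|: vx n false (i + 5) /\
    Vwin n i 7 :&: Vset f 0 =
      Vwin n i 7 :\: (vx n false (i + 3) :|: vx n true (i + 1)
                      :|: vx n true (i + 2) :|: vx n false (i + 5)))
   \/
   (Vwin n i 7 :&: Vset f 2 =
      vx n true (i + 4) :|: vx n true (i + 5) :|: vx n false (i + 1) /\
    Vwin n i 7 :&: Vset f 0 =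
      Vwin n i 7 :\: (vx n false (i + 3) :|: vx n true (i + 4)
                      :|: vx n true (i + 5) :|: vx n false (i + 1)))).
Proof.
case: n f => [//|n'] f n5 Hm Hr.
have N5 : 4 < n'.+1 by [].
have r6 : Rk n' i 6 = rv n' false (i + 1) by apply: RkE => //; lia.
have r7 : Rk n' i 7 = rv n' true (i + 1) by apply: RkE => //; lia.
have r9 : Rk n' i 9 = rv n' true (i + 2) by apply: RkE => //; lia.
have r10 : Rk n' i 10 = rv n' false (i + 3) by apply: RkE => //; lia.
have r13 : Rk n' i 13 = rv n' true (i + 4) by apply: RkE => //; lia.
have r14 : Rk n' i 14 = rv n' false (i + 5) by apply: RkE => //; lia.
have r15 : Rk n' i 15 = rv n' true (i + 5) by apply: RkE => //; lia.
pose P := fun k => f (Rk n' i k).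
have rE := r_setE i N5 Hm.
have Hs : sumn (map (rr P) (Wm (minn n'.+1 7))) <= 1.
  move: Hr; rewrite rE; set S := sumn _ => h.
  have h' : (S%:R <= 1 :> rat)%R by lra.
  by rewrite lern1 in h'.
have P2 : forall j, P j <= 2 by move=> j; exact: F1.
case: (ltnP n'.+1 7) => hN.
- exfalso.
  have mE : minn n'.+1 7 = n'.+1 by lia.
  rewrite mE in Hs.
  have Hc := @allcs_ok n' i f n'.+1 true N5 Hm (ltnW hN) (fun _ => erefl) Hs.
  have E : stages n'.+1 true 22 = [::].
    have : n' = 4 \/ n' = 5 by lia.
    by case => ->; [exact: chk5 | exact: chk6].
  have Hin := stages_sound _ _ P P2 Hc 22.
  by rewrite E in_nil in Hin.
have mE : minn n'.+1 7 = 7 by lia.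
rewrite mE in Hs rE.
have Hc := @allcs_ok n' i f 7 false N5 Hm (leqnn _) (fun h => False_ind _ (notF h)) Hs.
have Hin := stages_sound _ _ P P2 Hc 22.
have G : goal7 P by rewrite -(goal7_local P); exact: (chk7' _ Hin).
clear Hin Hc.
move: G => /andP [/eqP S1 HL].
have V1 := VwinV i f 1 N5; have V2 := VwinV i f 2 N5.
rewrite mE in V1 V2.
have V0 := V0split (Vwin n'.+1 i 7) (fun w => F1 w Hm).
split; first by rewrite rE S1; lra.
case/orP: HL => /eqP HL.
- have E1 : Vwin n'.+1 i 7 :&: Vset f 1 = vx n'.+1 false (i + 3).
    rewrite V1 (filtL 1 HL); apply/setP => w; rewrite /= !inE r10 eq_rv //.
  have E2 : Vwin n'.+1 i 7 :&: Vset f 2 =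
      vx n'.+1 true (i + 1) :|: vx n'.+1 true (i + 2) :|: vx n'.+1 false (i + 5).
    rewrite V2 (filtL 2 HL); apply/setP => w; rewrite /= !inE r7 r9 r14 !eq_rv.
    by rewrite !orbA.
  split => //; left; split => //.
  by rewrite V0 E1 E2 !setUA.
- have E1 : Vwin n'.+1 i 7 :&: Vset f 1 = vx n'.+1 false (i + 3).
    rewrite V1 (filtL 1 HL); apply/setP => w; rewrite /= !inE r10 eq_rv //.
  have E2 : Vwin n'.+1 i 7 :&: Vset f 2 =
      vx n'.+1 true (i + 4) :|: vx n'.+1 true (i + 5) :|: vx n'.+1 false (i + 1).
    rewrite V2 (filtL 2 HL); apply/setP => w; rewrite /= !inE r6 r13 r15 !eq_rv.
    by rewrite [in LHS]orbC.
  split => //; right; split => //.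
  by rewrite V0 E1 E2 !setUA.
Qed.
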